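(* Let $V$ be a population of $n$ individuals with pseudo-metric $d$, and let $\ell,k$ be positive integers. Construct collections $\mathcal{G}^\ell,\mathcal{G}^{\ell-1},\dots,\mathcal{G}^1$ as follows: start with a root collection $\mathcal{R}=\{v: v\in V\}$ (each individual is its own group, with $I(v)=\{v\}$); for $t=\ell$ down to $1$, let $\mathcal{G}^t=\mathrm{MGC}(V,d,t\cdot k,\mathcal{R})$, and then for each $H\in\mathcal{G}^t$ remove the groups contained in $H$ from $\mathcal{R}$ and add $H$ to $\mathcal{R}$. Fix $j\in[\ell]$ and let $P\subseteq V$ be a panel containing, for each group $G\in\mathcal{G}^j$, at least one individual of $I(G)$. Then $P$ satisfies $O(4^{\ell-j})$-PFC for population $V$ and panel size $j\cdot k$ (where $O(\cdot)$ hides an absolute constant).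
   Context: Groups are hierarchical: a group is either an individual of $V$ or a set of groups; $I(G)=\{G\}$ if $G\in V$ and $I(G)=\bigcup_{H\in G}I(H)$ otherwise. $B(x,\delta)=\{u\in V: d(x,u)\le\delta\}$. The procedure $\mathrm{MGC}(V,d,K,\mathcal{G})$ (Modified Greedy Capture), where $\mathcal{G}$ is a collection of groups whose sets $I(G)$ partition $V$: set $U=\mathcal{G}$ (uncovered groups), output $\mathcal{G}'=\emptyset$, and increase a radius $\delta$ continuously from $0$ while $U\neq\emptyset$. At each $\delta$: for each already formed output group $G'$ with center $c_{G'}$, remove from $U$ every $H\in U$ with $I(H)\subseteq B(c_{G'},\delta)$; then, while there is $x\in V$ such that $|\bigcup\{I(H): H\in U, I(H)\subseteq B(x,\delta)\}|\ge n/K$, form the new group $N=\{H\in U: I(H)\subseteq B(x,\delta)\}$ with center $c_N=x$ and radius $r_N=\delta$, add $N$ to $\mathcal{G}'$ and remove its members from $U$. Return $\mathcal{G}'$. A set $P\subseteq V$ satisfies $\alpha$-PFC for population $V$ with panel size $K$ if for every $S\subseteq V$ with $|S|\ge n/K$ there exist $v\in S$, $p\in P$ with $d(v,p)\le\alpha\cdot\min_{y\in V}\max_{u\in S}d(u,y)$. *)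

(* Defs.v *)
From HB Require Import structures.
From mathcomp Require Import all_boot all_order all_algebra.
From mathcomp Require Import reals.
Set Implicit Arguments. Unset Strict Implicit. Unset Printing Implicit Defensive.
Import Order.TTheory GRing.Theory Num.Theory.
Local Open Scope ring_scope.

Definition pseudo_metric (R : realType) (V : finType) (d : V -> V -> R) : Prop :=
  [/\ (forall x, d x x = 0), (forall x y, 0 <= d x y),
      (forall x y, d x y = d y x) & (forall x y z, d x z <= d x y + d y z)].

Definition cball (R : realType) (V : finType) (d : V -> V -> R) (x : V) (delta : R)
  : {set V} := [set u | d x u <= delta].

Definition thresh (R : realType) (V : finType) (K : nat) : R := #|V|%:R / K%:R.

(* A group is represented by its set of individuals I(G).  An output group of
   MGC is a record: its center, its radius and its set of member groups. *)
Record formed (R : realType) (V : finType) := Formed {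
  center : V; radius : R; members : {set {set V}} }.

Definition Iset (R : realType) (V : finType) (N : formed R V) : {set V} :=
  \bigcup_(H in members N) H.

(* The uncovered groups U at radius delta, when the output groups formed so far
   are s: input groups not put in any formed group and not contained in the
   ball B(c_N, delta) of any formed group N. *)
Definition Ustate (R : realType) (V : finType) (d : V -> V -> R)
  (G : {set {set V}}) (s : seq (formed R V)) (delta : R) : {set {set V}} :=
  [set H in G | all (fun N => (H \notin members N) &&
                              ~~ (H \subset cball d (center N) delta)) s].

Definition capt (R : realType) (V : finType) (d : V -> V -> R)
  (U : {set {set V}}) (x : V) (delta : R) : nat :=
  #|\bigcup_(H in U | H \subset cball d x delta) H|.

(* s (in order of formation) is a possible output of MGC(V, d, K, G),
   the radius delta increasing continuously from 0. *)
Definition MGC_run (R : realType) (V : finType) (d : V -> V -> R)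
  (K : nat) (G : {set {set V}}) (s : seq (formed R V)) : Prop :=
  [/\ sorted <=%R (map (@radius R V) s),
      all (fun N => 0 <= radius N) s,
      (forall pre N post, s = pre ++ N :: post ->
         members N = [set H in Ustate d G pre (radius N) |
                          H \subset cball d (center N) (radius N)]
         /\ thresh R V K <= (#|Iset N|)%:R) &
      (* between consecutive formations (and after the last one) no new group
         can be formed *)
      (forall pre post, s = pre ++ post -> forall delta : R, 0 <= delta ->
         all (fun N => radius N <= delta) pre ->
         all (fun N => delta < radius N) post ->
         forall x, (capt d (Ustate d G pre delta) x delta)%:R < thresh R V K)].

Definition replace (R : realType) (V : finType) (Rc : {set {set V}})
  (out : seq (formed R V)) : {set {set V}} :=
  (Rc :\: \bigcup_(N <- out) members N) :|: [set X | X in [seq Iset N | N <- out]].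

(* The hierarchical construction of G^l, ..., G^1; Rs t is the root
   collection before computing G^t = Gs t. *)
Definition hier_run (R : realType) (V : finType) (d : V -> V -> R) (l k : nat)
  (Rs : nat -> {set {set V}}) (Gs : nat -> seq (formed R V)) : Prop :=
  Rs l = [set [set v] | v : V] /\
  (forall t, (1 <= t <= l)%N ->
     MGC_run d (t * k) (Rs t) (Gs t) /\ Rs t.-1 = replace (Rs t) (Gs t)).

Definition maxd (R : realType) (V : finType) (d : V -> V -> R) (S : {set V}) (y : V) : R :=
  \big[Num.max/0]_(u in S) d u y.

(* min_{y in V} max_{u in S} d(u, y)   (0 if V is empty) *)
Definition rad (R : realType) (V : finType) (d : V -> V -> R) (S : {set V}) : R :=
  match [pick y : V] with
  | Some y0 => \big[Num.min/maxd d S y0]_(y : V) maxd d S y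
  | None => 0
  end.

Definition PFC (R : realType) (V : finType) (d : V -> V -> R) (alpha : R) (K : nat)
  (P : {set V}) : Prop :=
  forall S : {set V}, thresh R V K <= (#|S|)%:R ->
    exists v, exists p, [/\ v \in S, p \in P & d v p <= alpha * rad d S].

(* Main.v *)
Require Import Defs.
From HB Require Import structures.
From mathcomp Require Import all_boot all_order all_algebra.
From mathcomp Require Import reals ring lra zify.
Import Order.TTheory GRing.Theory Num.Theory.
Local Open Scope ring_scope.
Set Implicit Arguments. Unset Strict Implicit.

Lemma notall_split (T : Type) (p : pred T) (s : seq T) :
  ~~ all p s -> exists a x b, s = a ++ x :: b /\ ~~ p x.
Proof.
elim: s => //= x s IH; case px: (p x) => /= H.
  by have [a [y [b [-> py]]]] := IH H; exists (x :: a), y, b.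
by exists [::], x, s; rewrite px.
Qed.

Lemma all_split (T : Type) (p : pred T) (s a b : seq T) x :
  all p s -> s = a ++ x :: b -> p x.
Proof. by move=> H E; move: H; rewrite E all_cat /= => /and3P[]. Qed.

Lemma map_split (T : Type) (U : eqType) (f : T -> U) s y :
  y \in map f s -> exists a x b, s = a ++ x :: b /\ y = f x.
Proof.
elim: s => //= x s IH; rewrite in_cons => /orP[/eqP->|/IH].
  by exists [::], x, s.
by move=> [a [z [b [-> ->]]]]; exists (x :: a), z, b.
Qed.

Lemma split_map (T : Type) (U : eqType) (f : T -> U) s a x b :
  s = a ++ x :: b -> f x \in map f s.
Proof. by move=> ->; rewrite map_cat mem_cat /= mem_head orbT. Qed.

Lemma bigcup_split (T : Type) (W : finType) (F : T -> {set W}) s w :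
  w \in \bigcup_(N <- s) F N -> exists a x b, s = a ++ x :: b /\ w \in F x.
Proof.
elim: s => [|x s IH]; first by rewrite big_nil inE.
rewrite big_cons in_setU => /orP[H|/IH].
  by exists [::], x, s.
by move=> [a [z [b [-> H]]]]; exists (x :: a), z, b.
Qed.

Lemma split_bigcup (T : Type) (W : finType) (F : T -> {set W}) s a x b w :
  s = a ++ x :: b -> w \in F x -> w \in \bigcup_(N <- s) F N.
Proof.
move=> -> H; elim: a => [|y a IH]; first by rewrite /= big_cons in_setU H.
by rewrite cat_cons big_cons in_setU IH orbT.
Qed.

Lemma sorted_split (R : realType) (V : finType) (s : seq (formed R V)) (e : R) :
  sorted <=%R (map (@radius R V) s) ->
  exists pre post, [/\ s = pre ++ post, all (fun N => radius N <= e) pre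
                     & all (fun N => e < radius N) post].
Proof.
elim: s => [|x s IH] /=; first by move=> _; exists [::], [::].
move=> Hp; have Hs := path_sorted Hp.
have Hall := order_path_min (@le_trans _ R) Hp.
case: (leP (radius x) e) => hx.
  have [pre [post [-> H1 H2]]] := IH Hs.
  by exists (x :: pre), post; rewrite /= hx H1 H2.
exists [::], (x :: s); split => //=; rewrite hx /=.
move: Hall; rewrite all_map; apply: sub_all => y /= hy.
exact: lt_le_trans hx hy.
Qed.

Lemma sorted_before (R : realType) (V : finType) (s pre post a b : seq (formed R V)) N N' :
  sorted <=%R (map (@radius R V) s) ->
  s = pre ++ N :: post -> s = a ++ N' :: b -> radius N' < radius N ->
  exists c, pre = a ++ N' :: c.
Proof.
elim: a s pre => [|x a IH] s pre Hs E1 E2 hlt.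
  case: pre E1 => [|z pre] E1.
    by move: hlt; rewrite E2 /= in E1; case: E1 => ->; rewrite ltxx.
  by exists pre; rewrite E2 /= in E1; case: E1 => ->.
case: pre E1 => [|z pre] E1.
  rewrite E2 /= in E1; case: E1 => E3 E4; subst x.
  move: Hs; rewrite E2 /= => Hp.
  have := order_path_min (@le_trans _ R) Hp; rewrite all_map => Hall.
  have := all_split Hall (erefl _) => /=.
  by rewrite leNgt hlt.
rewrite E2 /= in E1; case: E1 => E3 E4; subst z.
have Hs' : sorted <=%R (map (@radius R V) (a ++ N' :: b)).
  by move: Hs; rewrite E2 /= => /path_sorted.
have [c ->] := IH _ pre Hs' E4 (erefl _) hlt.
by exists c.
Qed.

Lemma cball_mono (R : realType) (V : finType) (d : V -> V -> R) x e1 e2 :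
  e1 <= e2 -> cball d x e1 \subset cball d x e2.
Proof. by move=> le; apply/subsetP => u; rewrite !inE => /le_trans; apply. Qed.

Lemma members_sub (R : realType) (V : finType) (d : V -> V -> R) K G s pre N post H :
  MGC_run d K G s -> s = pre ++ N :: post -> H \in members N ->
  H \in G /\ H \subset cball d (center N) (radius N).
Proof.
case=> _ _ Hf _ Es; have [-> _] := Hf _ _ _ Es.
by rewrite inE => /andP[]; rewrite inE => /andP[-> _] ->.
Qed.

Lemma Iset_ball (R : realType) (V : finType) (d : V -> V -> R) K G s pre N post :
  MGC_run d K G s -> s = pre ++ N :: post ->
  Iset N \subset cball d (center N) (radius N).
Proof.
move=> run Es; apply/subsetP => u /bigcupP [H HN uH].
have [_ /subsetP] := members_sub run Es HN; exact.
Qed.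

Lemma key (R : realType) (V : finType) (d : V -> V -> R) (pm : pseudo_metric d)
  K G s (run : MGC_run d K G s)
  (cov : forall v, exists2 H, H \in G & v \in H) (S : {set V})
  (hS : thresh R V K <= #|S|%:R) y r rho (hr : 0 <= r) (hrho : 0 <= rho)
  (hSy : forall u, u \in S -> d y u <= r)
  (hG : forall H, H \in G -> (exists2 v, v \in S & v \in H) ->
          exists c, H \subset cball d c rho) :
  exists a N b (H0 : {set V}) (v0 : V), [/\ s = a ++ N :: b, radius N <= r + rho + rho, v0 \in S,
     v0 \in H0 & H0 \subset cball d (center N) (r + rho + rho)].
Proof.
case: pm => d0 dpos dsym dtri.
have run' := run; case: run' => Hsort Hpos Hform Hstop.
set e0 := r + rho + rho.
have [pre [post [Es Hpre Hpost]]] := sorted_split e0 Hsort.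
have e0pos : 0 <= e0 by rewrite /e0; lra.
have Hlt := Hstop pre post Es e0 e0pos Hpre Hpost y.
have : ~~ (S \subset \bigcup_(H in Ustate d G pre e0 | H \subset cball d y e0) H).
  apply/negP => sub; have c1 := subset_leq_card sub.
  have c2 : (#|S|%:R <= (capt d (Ustate d G pre e0) y e0)%:R :> R) by rewrite ler_nat.
  lra.
case/subsetPn => v vS vnot.
have [H HG vH] := cov v.
have [c /subsetP Hc] := hG H HG (ex_intro2 _ _ v vS vH).
have Hy : H \subset cball d y e0.
  apply/subsetP => h hH; rewrite inE.
  have := dtri y v h; have := dtri v c h; have := dsym v c.
  have := Hc _ vH; have := Hc _ hH; have := hSy _ vS; rewrite !inE /e0.
  lra.
have HnU : H \notin Ustate d G pre e0.
  apply/negP => HU; apply: (negP vnot); apply/bigcupP; exists H => //; by rewrite HU Hy.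
move: HnU; rewrite inE HG /= => /notall_split [a [N [b [Epre HN]]]].
have Es' : s = a ++ N :: (b ++ post) by rewrite Es Epre -catA.
have hN := all_split Hpre Epre.
exists a, N, (b ++ post), H, v; split => //.
move: HN; rewrite negb_and !negbK => /orP[HN|//].
have [_ Hb] := members_sub run Es' HN.
by apply: subset_trans Hb (cball_mono _ _ hN).
Qed.

Lemma bound_members (R : realType) (V : finType) (d : V -> V -> R) (pm : pseudo_metric d)
  K G s (run : MGC_run d K G s)
  (cov : forall v, exists2 H, H \in G & v \in H) (S : {set V})
  (hS : thresh R V K <= #|S|%:R) y r rho (hr : 0 <= r) (hrho : 0 <= rho)
  (hSy : forall u, u \in S -> d y u <= r)
  (hG : forall H, H \in G -> (exists2 v, v \in S & v \in H) ->
          exists c, H \subset cball d c rho)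
  pre N post H :
  s = pre ++ N :: post -> H \in members N -> (exists2 v, v \in S & v \in H) ->
  radius N <= 3 * r + 4 * rho.
Proof.
move=> Es HM [v vS vH].
have [a [N' [b [H0 [v0 [Es' hN' v0S v0H0 H0sub]]]]]] :=
  key pm run cov hS hr hrho hSy hG.
case: (leP (radius N) (3 * r + 4 * rho)) => // hlt; exfalso.
have hlt' : radius N' < radius N by lra.
have run' := run; case: run' => Hsort _ Hform _.
have [c Epre] := sorted_before Hsort Es Es' hlt'.
have [HG _] := members_sub run Es HM.
have [Hm _] := Hform _ _ _ Es.
move: HM; rewrite Hm inE => /andP[HU _]; move: HU; rewrite inE => /andP[_ Hall].
have := all_split Hall Epre => /andP[_ /negP]; apply.
have [cH /subsetP HcH] := hG H HG (ex_intro2 _ _ v vS vH).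
case: pm => d0 dpos dsym dtri.
apply/subsetP => h hH; rewrite inE.
have := dtri (center N') v0 h; have := dtri v0 y h; have := dtri y v h;
  have := dtri v cH h; have := dsym v cH; have := dsym v0 y.
have := (subsetP H0sub) _ v0H0; have := HcH _ vH; have := HcH _ hH;
  have := hSy _ vS; have := hSy _ v0S; rewrite !inE.
lra.
Qed.

Lemma rad_attain (R : realType) (V : finType) (d : V -> V -> R) (S : {set V}) :
  (0 < #|V|)%N -> exists y : V, Defs.rad d S = maxd d S y.
Proof.
move=> Vpos; rewrite /Defs.rad; case: pickP => [y0 _|H]; last first.
  by move/card_gt0P: Vpos => [x _]; have := H x.
apply: (big_ind (fun m => exists y, m = maxd d S y)); first by exists y0.
  move=> _ _ [a ->] [b ->]; rewrite minEle; case: ifP => _; eexists; reflexivity.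
by move=> i _; exists i.
Qed.

Lemma maxd_ge (R : realType) (V : finType) (d : V -> V -> R) (S : {set V}) (u y : V) :
  u \in S -> d u y <= maxd d S y.
Proof. by move=> uS; rewrite /maxd; apply: le_bigmax_cond. Qed.

Lemma maxd_ge0 (R : realType) (V : finType) (d : V -> V -> R) (S : {set V}) (y : V) :
  0 <= maxd d S y.
Proof. by rewrite /maxd; apply: bigmax_ge_id. Qed.

Lemma thresh_mono (R : realType) (V : finType) (j t k : nat) :
  (0 < j)%N -> (0 < k)%N -> (j <= t)%N -> thresh R V (t * k) <= thresh R V (j * k).
Proof.
move=> j0 k0 jt; rewrite /thresh; apply: ler_wpM2l => //.
have p1 : (0 < (j * k)%:R :> R) by rewrite ltr0n muln_gt0 j0.
have p2 : (0 < (t * k)%:R :> R) by rewrite ltr0n muln_gt0 k0 andbT; apply: leq_trans jt.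
rewrite lef_pV2 ?posrE // ler_nat leq_mul2r jt orbT //.
Qed.

Theorem lemma1 :
  exists C : nat,
  forall (R : realType) (V : finType) (d : V -> V -> R),
    pseudo_metric d -> (0 < #|V|)%N ->
  forall (l k : nat), (0 < l)%N -> (0 < k)%N ->
  forall (Rs : nat -> {set {set V}}) (Gs : nat -> seq (formed R V)),
    hier_run d l k Rs Gs ->
  forall j : nat, (1 <= j <= l)%N ->
  forall P : {set V},
    (forall pre N post, Gs j = pre ++ N :: post ->
       exists2 p, p \in P & p \in Iset N) ->
    PFC d (C%:R * 4 ^+ (l - j)) (j * k) P.
Proof.
exists 4%N => R V d pm Vpos l k lpos kpos Rs Gs [HRl Hstep] j /andP[j1 jl] P HP S hS.
have pm' := pm; case: pm' => d0 dpos dsym dtri.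
have [y hy] := rad_attain d S Vpos.
rewrite hy.
set r := maxd d S y.
have hSy : forall u, u \in S -> d y u <= r by move=> u uS; rewrite dsym; apply: maxd_ge.
have hr : 0 <= r by apply: maxd_ge0.
have hSt : forall t, (j <= t)%N -> thresh R V (t * k) <= #|S|%:R.
  by move=> t jt; apply: le_trans hS; apply: thresh_mono.
pose rho (m : nat) := (4 ^+ m - 1) * r.
have rho_nn : forall m, 0 <= rho m.
  by move=> m; rewrite /rho mulr_ge0 // subr_ge0 exprn_ege1 // ler1n.
have rhoS : forall m, rho m.+1 = 3 * r + 4 * rho m.
  by move=> m; rewrite /rho exprS; ring.
have Hinv : forall m, (m <= l - j)%N ->
  (forall v, exists2 H, H \in Rs (l - m)%N & v \in H) /\
  (forall H, H \in Rs (l - m)%N -> (exists2 v, v \in S & v \in H) ->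
     exists c, H \subset cball d c (rho m)).
  elim => [_|m IH hm].
    rewrite subn0 HRl; split.
      by move=> v; exists [set v]; [apply: imset_f | rewrite in_set1].
    move=> H /imsetP [v _ ->] _; exists v; apply/subsetP => u.
    by rewrite !inE => /eqP ->; rewrite d0 /rho expr0 subrr mul0r.
  have [cov inv] := IH (ltnW hm).
  have tpos : (1 <= l - m <= l)%N.
    by apply/andP; split; lia.
  set t := (l - m)%N in cov inv tpos.
  have [run Erep] := Hstep t tpos.
  have Et : (l - m.+1)%N = t.-1 by rewrite subnS.
  have hS_t : thresh R V (t * k) <= #|S|%:R by apply: hSt; rewrite /t; lia.
  rewrite Et Erep; split.
    move=> v; have [H HR vH] := cov v.
    case Hin: (H \in \bigcup_(N <- Gs t) members N).
      have [a [N [b [E HN]]]] := bigcup_split Hin.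
      exists (Iset N); last by rewrite /Iset; apply/bigcupP; exists H.
      rewrite /replace in_setU; apply/orP; right.
      by apply/imsetP; exists (Iset N) => //; apply: split_map E.
    by exists H => //; rewrite /replace in_setU in_setD Hin HR.
  move=> H; rewrite /replace in_setU in_setD.
  case/orP => [/andP[_ HR] hv | /imsetP[X XI ->] [v vS vI]].
    have [c Hc] := inv H HR hv; exists c; apply: subset_trans Hc (cball_mono _ _ _).
    by rewrite rhoS; have := rho_nn m; lra.
  have [a [N [b [E EX]]]] := map_split XI; subst X.
  move: vI; rewrite /Iset => /bigcupP [H' HN vH'].
  have HB := bound_members pm run cov hS_t hr (rho_nn m) hSy inv E HN (ex_intro2 _ _ v vS vH').
  exists (center N); apply: subset_trans (Iset_ball run E) (cball_mono _ _ _).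
  by rewrite rhoS.
have [cov inv] := Hinv (l - j)%N (leqnn _).
rewrite subKn // in cov inv.
have [run _] := Hstep j (introT andP (conj j1 jl)).
have [a [N [b [H0 [v0 [E hN v0S v0H0 H0sub]]]]]] :=
  key pm run cov hS hr (rho_nn _) hSy inv.
have [p pP pI] := HP _ _ _ E.
exists v0, p; split => //.
have h1 := (subsetP H0sub) _ v0H0; have h2 := (subsetP (Iset_ball run E)) _ pI.
rewrite !inE in h1 h2.
have := dtri v0 (center N) p; have := dsym v0 (center N).
have e : rho (l - j)%N = 4 ^+ (l - j) * r - r by rewrite /rho mulrBl mul1r.
move: hN h1 h2; rewrite e.
have : 0 <= 4 ^+ (l - j) * r by rewrite mulr_ge0 // exprn_ge0.
rewrite -mulrA.
lra.
Qed.
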